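(* Let $T\ge0$ and let $a,k\in\{0,1,2,\dots\}$ with $a<k$. Then for every $b\in\mathbb N_+$ with $a<b\le k$, $$v(k-a-1,T)\le\alpha\,v(k-b,T)+(1-\alpha)\,v(k-a,T),\qquad \alpha=\frac{1}{b-a}.$$
   Context: Let $\lambda>0$ and let $N$ be a Poisson process with intensity $\lambda$, arrival times $0<\sigma_1<\sigma_2<\cdots$, and natural filtration $\mathcal F_t=\sigma(N_s:s\le t)$. Let $F:[0,\infty)\to[0,\infty)$ be strictly increasing and strictly convex with $F(0)=0$. For $k\in\{0,1,\dots\}$ let $\mathcal A_k$ be the set of $(\mathcal F_t)$-adapted, integer-valued, nonnegative, non-increasing processes $\xi$ with $\xi_0=k$ whose values change only at arrival times of $N$, and $v(k,T)=\inf_{\xi\in\mathcal A_k}\mathbb E[\sum_{i:\sigma_i\le T}F(\xi_{\sigma_i-}-\xi_{\sigma_i})+F(\xi_T)]$ (so $v(0,T)=0$). *)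

(* Defs.v *)
From HB Require Import structures.
From mathcomp Require Import all_boot all_order all_algebra.
From mathcomp Require Import all_classical all_reals all_analysis.
Set Implicit Arguments. Unset Strict Implicit. Unset Printing Implicit Defensive.
Import Order.TTheory GRing.Theory Num.Theory.
Import numFieldNormedType.Exports.
Local Open Scope classical_set_scope.
Local Open Scope ring_scope.

Section Defs.
Context {R : realType} {d : measure_display} {Omega : measurableType d}.

(* sigma 0 = 0 by convention; sigma i (i >= 1) is the i-th arrival time. *)
Definition interarrival (sigma : nat -> Omega -> R) (i : nat) (w : Omega) : R :=
  sigma i.+1 w - sigma i w.

Definition is_poisson_arrivals (P : probability Omega R) (lam : R)
    (sigma : nat -> Omega -> R) : Prop :=
  [/\ (forall w, sigma 0%N w = 0),
      (forall i w, sigma i w < sigma i.+1 w),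
      (forall i, measurable_fun setT (sigma i)),
      (forall i x, 0 <= x ->
         P [set w | x < interarrival sigma i w] = (expR (- (lam * x)))%:E) &
      (forall (s : seq nat) (B : nat -> set R), uniq s ->
         (forall i, measurable (B i)) ->
         P [set w | forall i, i \in s -> B i (interarrival sigma i w)] =
         (\prod_(i <- s) P [set w | B i (interarrival sigma i w)])%E)].

(* natural filtration F_t = sigma(N_s : s <= t); since {N_s >= i} = {sigma_i <= s},
   it is generated by the events {sigma_i <= s}, i >= 1, 0 <= s <= t. *)
Definition natural_filtration (sigma : nat -> Omega -> R) (t : R) : set (set Omega) :=
  <<s [set A | exists i s, [/\ (0 < i)%N, 0 <= s, s <= t & A = [set w | sigma i w <= s]]] >>.

Definition admissible (sigma : nat -> Omega -> R) (k : nat) (xi : R -> Omega -> nat) : Prop :=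
  [/\ (forall w, xi 0 w = k),
      (forall t n, 0 <= t -> natural_filtration sigma t [set w | xi t w = n]),
      (forall w s t, 0 <= s -> s <= t -> (xi t w <= xi s w)%N) &
      (forall w s t, 0 <= s -> s <= t ->
         (forall i, (0 < i)%N -> ~ (s < sigma i w /\ sigma i w <= t)) ->
         xi t w = xi s w)].

(* xi_{sigma_i -} = xi (sigma_{i-1}) since xi is constant on [sigma_{i-1}, sigma_i). *)
Definition cost (F : R -> R) (sigma : nat -> Omega -> R) (xi : R -> Omega -> nat)
    (T : R) (w : Omega) : \bar R :=
  ((\sum_(1 <= i <oo)
      (if (sigma i w <= T)%R then (F (xi (sigma i.-1 w) w - xi (sigma i w) w)%:R)%:E
       else 0%E)) + (F (xi T w)%:R)%:E)%E.

Definition value (P : probability Omega R) (F : R -> R) (sigma : nat -> Omega -> R)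
    (k : nat) (T : R) : \bar R :=
  ereal_inf [set (\int[P]_w cost F sigma xi T w)%E | xi in admissible sigma k].

End Defs.

(* Main.v *)
Require Import Defs.
From HB Require Import structures.
From mathcomp Require Import all_boot all_order all_algebra.
From mathcomp Require Import all_classical all_reals all_analysis.
From mathcomp Require Import measurable_realfun.
From mathcomp Require Import zify ring lra.
From Stdlib Require Import Lia.
Import Order.TTheory GRing.Theory Num.Theory.
Import numFieldNormedType.Exports.
Local Open Scope classical_set_scope.
Local Open Scope ring_scope.

Section Aux.
Context {R : realType} {d : measure_display} {Omega : measurableType d}.
Variable sigma : nat -> Omega -> R.
Hypothesis s0 : forall w, sigma 0%N w = 0.
Hypothesis sinc : forall i w, sigma i w < sigma i.+1 w.
Hypothesis smeas : forall i, measurable_fun setT (sigma i).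

Lemma sig_le i j w : (i <= j)%N -> sigma i w <= sigma j w.
Proof.
move=> /subnK <-; elim: (j - i)%N => [|n IH]; first by rewrite add0n.
rewrite addSn; exact: le_trans IH (ltW (sinc _ _)).
Qed.

Lemma sig_ge0 i w : 0 <= sigma i w.
Proof. by rewrite -(s0 w) sig_le. Qed.

Lemma xi_const k xi i w t : admissible sigma k xi ->
  sigma i w <= t -> t < sigma i.+1 w -> xi t w = xi (sigma i w) w.
Proof.
case=> _ _ _ H4 h1 h2; apply: H4 => //; first exact: sig_ge0.
move=> j j0 [h3 h4]; have [ji|ij] := leqP j i.
  by move: (sig_le _ _ w ji); rewrite leNgt h3.
by move: (sig_le _ _ w ij); rewrite leNgt (le_lt_trans h4 h2).
Qed.

Lemma meas_le i (s : R) : measurable [set w | sigma i w <= s].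
Proof.
have := smeas i measurableT _ (measurable_itv `]-oo, s]).
by rewrite setTI; congr measurable; apply/seteqP; split => w /=; rewrite in_itv /=.
Qed.

Lemma meas_gt i (s : R) : measurable [set w | s < sigma i w].
Proof.
have := smeas i measurableT _ (measurable_itv `]s, +oo[).
by rewrite setTI; congr measurable; apply/seteqP; split => w /=; rewrite in_itv /= andbT.
Qed.

Lemma filt_meas t A : natural_filtration sigma t A -> measurable A.
Proof.
apply: smallest_sub; first exact: sigma_algebra_measurable.
by move=> B [i [s [_ _ _ ->]]]; exact: meas_le.
Qed.

Lemma meas_count (I : countType) (f : Omega -> \bar R) (c : I -> set Omega) (v : I -> \bar R) :
  (forall n, measurable (c n)) -> (forall n w, c n w -> f w = v n) ->
  (forall w, exists n, c n w) -> measurable_fun setT f.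
Proof.
move=> mc fc cov _ Y mY; rewrite setTI.
have -> : f @^-1` Y = \bigcup_n (if `[< Y (v n) >] then c n else set0).
  apply/seteqP; split => w /=.
    move=> Yw; have [n cn] := cov w; exists n => //.
    by rewrite (fc _ _ cn) in Yw; rewrite asboolT.
  move=> [n _]; case: ifPn => // /asboolP Yv cn; by rewrite (fc _ _ cn).
apply: countable_bigcupT_measurable; first exact: countableP.
by move=> n; case: ifPn.
Qed.

Lemma meas_gi k xi i n : admissible sigma k xi ->
  measurable [set w | xi (sigma i w) w = n].
Proof.
move=> adm.
have -> : [set w | xi (sigma i w) w = n] = \bigcup_(r : rat)
   (if (0 <= ratr r :> R) then [set w | sigma i w <= ratr r] `&`
      [set w | ratr r < sigma i.+1 w] `&` [set w | xi (ratr r) w = n] else set0).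
  apply/seteqP; split => w /=.
    move=> h; have [r] := rat_in_itvoo (sinc i w).
    rewrite in_itv /= => /andP[r1 r2]; exists r => //.
    rewrite (le_trans (sig_ge0 i w) (ltW r1)); split; [split|] => //.
      exact: ltW.
    by rewrite /= (xi_const _ _ _ _ _ adm (ltW r1) r2).
  move=> [r _]; case: ifPn => // r0 [[h1 h2] h3].
  by rewrite -(xi_const _ _ _ _ _ adm h1 h2).
apply: bigcupT_measurable_rat => r; case: ifPn => // r0.
apply: measurableI; first apply: measurableI.
- exact: meas_le.
- exact: meas_gt.
- apply: filt_meas; case: adm => _ H2 _ _; exact: (H2 _ _ r0).
Qed.


Variable F : R -> R.
Hypothesis F0 : forall x, 0 <= x -> 0 <= F x.

Definition summand (xi : R -> Omega -> nat) (T : R) (i : nat) (w : Omega) : \bar R :=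
  if sigma i w <= T then (F (xi (sigma i.-1 w) w - xi (sigma i w) w)%:R)%:E else 0%E.

Lemma summand_ge0 xi T i w : (0 <= summand xi T i w)%E.
Proof. rewrite /summand; case: ifPn => // _; rewrite lee_fin F0 //. Qed.

Lemma meas_summand k xi T i : admissible sigma k xi ->
  measurable_fun setT (summand xi T i).
Proof.
move=> adm.
apply: (@meas_count (nat * nat * bool)%type _
  (fun x => [set w | xi (sigma i.-1 w) w = x.1.1] `&` [set w | xi (sigma i w) w = x.1.2]
     `&` (if x.2 then [set w | sigma i w <= T] else ~` [set w | sigma i w <= T]))
  (fun x => if x.2 then (F (x.1.1 - x.1.2)%:R)%:E else 0%E)).
- move=> [[p q] b] /=; apply: measurableI; first apply: measurableI.
  + exact: meas_gi adm.
  + exact: meas_gi adm.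
  + by case: b; [exact: meas_le | apply: measurableC; exact: meas_le].
- move=> [[p q] b] w /= [[<- <-]]; rewrite /summand.
  by case: b => /=; [move=> -> | move=> /negP/negbTE ->].
- move=> w; exists (xi (sigma i.-1 w) w, xi (sigma i w) w, sigma i w <= T) => /=.
  by split => //; case: ifPn => //= /negP.
Qed.

Definition Ppos : pred nat := fun i => (0 < i)%N.

Lemma cost_eq xi T : cost F sigma xi T =
  (fun w => \sum_(i <oo | i \in Ppos) summand xi T i w
     + (F (xi T w)%:R)%:E)%E.
Proof.
apply/funext => w; rewrite /cost eseries_cond; congr (_ + _)%E.
Qed.

Lemma cost_ge0 xi T w : (0 <= cost F sigma xi T w)%E.
Proof.
rewrite cost_eq; apply: adde_ge0; last by rewrite lee_fin F0.
by apply: nneseries_ge0 => *; exact: summand_ge0.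
Qed.

Lemma meas_cost k xi T : 0 <= T -> admissible sigma k xi ->
  measurable_fun setT (cost F sigma xi T).
Proof.
move=> T0 adm; rewrite cost_eq; apply: emeasurable_funD.
  apply: ge0_emeasurable_sum => [n w _ _|n _]; first exact: summand_ge0.
  exact: meas_summand adm.
apply: (@meas_count nat _ (fun n => [set w | xi T w = n]) (fun n => (F n%:R)%:E)).
- move=> n; apply: filt_meas; case: adm => _ H2 _ _; exact: (H2 _ _ T0).
- by move=> n w /= ->.
- by move=> w; exists (xi T w).
Qed.


Lemma gs_I (G : set (set Omega)) (A B : set Omega) :
  <<s G >> A -> <<s G >> B -> <<s G >> (A `&` B).
Proof. exact: (@measurableI _ (g_sigma_algebraType G)). Qed.

Lemma hfacts n : (n = n./2 + n./2 + odd n /\ odd n <= 1)%N.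
Proof. split; last exact: leq_b1. by rewrite -{1}(odd_double_half n) -addnn addnC. Qed.

Definition f1 (n : nat) := (n - n./2)%N.
Definition f2 (n : nat) := n./2.

Definition comb (f : nat -> nat) (xi eta : R -> Omega -> nat) : R -> Omega -> nat :=
  fun t w => f (xi t w + eta t w)%N.

Lemma f_mono (f : nat -> nat) : (f = f1 \/ f = f2) -> forall m n, (m <= n)%N -> (f m <= f n)%N.
Proof.
move=> hf m n mn; have [e1 o1] := hfacts m; have [e2 o2] := hfacts n.
case: hf => ->; rewrite /f1 /f2; move: e1 o1 e2 o2;
  move: (m./2) (n./2) (odd m : nat) (odd n : nat) => a b c e; lia.
Qed.

Lemma comb_adm (f : nat -> nat) a1 a2 c xi eta : (f = f1 \/ f = f2) ->
  (a1 + a2 = c + c)%N ->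
  admissible sigma a1 xi -> admissible sigma a2 eta -> admissible sigma c (comb f xi eta).
Proof.
move=> hf hc [x1 x2 x3 x4] [y1 y2 y3 y4]; split.
- move=> w; rewrite /comb x1 y1 hc; have [e o] := hfacts (c + c).
  case: hf => ->; rewrite /f1 /f2; move: e o;
    move: ((c + c)./2) (odd (c + c) : nat) => a b; lia.
- move=> t n t0.
  have -> : [set w | comb f xi eta t w = n] = \bigcup_p \bigcup_q
      (if f (p + q)%N == n then [set w | xi t w = p] `&` [set w | eta t w = q] else set0).
    apply/seteqP; split => w /=.
      move=> h; exists (xi t w) => //; exists (eta t w) => //.
      by rewrite /comb in h; rewrite h eqxx.
    move=> [p _ [q _]]; case: ifPn => // /eqP <- [/= h1 h2]; by rewrite /comb h1 h2.
  apply: sigma_algebra_bigcup => p; apply: sigma_algebra_bigcup => q.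
  case: ifPn => _; last exact: sigma_algebra0.
  by apply: gs_I; [exact: x2 | exact: y2].
- move=> w s t s0' st; rewrite /comb; apply: f_mono => //.
  by apply: leq_add; [exact: x3 | exact: y3].
- by move=> w s t s0' st h; rewrite /comb (x4 _ _ _ s0' st h) (y4 _ _ _ s0' st h).
Qed.


Hypothesis Fconv : forall x y t, 0 <= x -> 0 <= y -> x != y -> 0 < t -> t < 1 ->
  F (t * x + (1 - t) * y) < t * F x + (1 - t) * F y.

Lemma major p q x y : (p + q = x + y)%N -> (q <= p.+1)%N -> (p <= q.+1)%N ->
  F p%:R + F q%:R <= F x%:R + F y%:R.
Proof.
wlog xy : x y / (x <= y)%N.
  move=> H h1 h2 h3; case: (leqP x y) => xy; first exact: H.
  rewrite [F x%:R + _]addrC; apply: H => //; [exact: ltnW | by rewrite h1 addnC].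
wlog pq : p q / (p <= q)%N.
  move=> H h1 h2 h3; case: (leqP p q) => pq; first exact: H.
  rewrite [F p%:R + _]addrC; apply: H => //; [exact: ltnW | by rewrite addnC].
move=> h1 h2 h3.
have [xp|xp] : (x = p \/ x < p)%N by lia.
  by subst x; have -> : q = y by lia.
have qy : (q < y)%N by lia.
have hR : (p%:R + q%:R = x%:R + y%:R :> R) by rewrite -!natrD h1.
have xpR : (x%:R < p%:R :> R) by rewrite ltr_nat.
have pyR : (p%:R < y%:R :> R) by rewrite ltr_nat; lia.
have x0 : (0 <= x%:R :> R) by [].
have y0 : (0 <= y%:R :> R) by [].
move: hR xpR pyR x0 y0; move: (p%:R) (q%:R) (x%:R) (y%:R) => P Q X Y hR xpR pyR x0 y0.
have yx : Y - X != 0 by rewrite subr_eq0 gt_eqF //; lra.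
set t := (Y - P) / (Y - X).
have ht0 : 0 < t by rewrite /t divr_gt0 //; lra.
have ht1 : t < 1 by rewrite /t ltr_pdivrMr; lra.
have ep : P = t * X + (1 - t) * Y by rewrite /t; field.
have eq : Q = t * Y + (1 - t) * X.
  have -> : Q = X + Y - P by lra.
  by rewrite ep; ring.
have XY : X != Y by rewrite lt_eqF //; lra.
have YX : Y != X by rewrite eq_sym.
have := Fconv X Y t x0 y0 XY ht0 ht1; have := Fconv Y X t y0 x0 YX ht0 ht1.
by rewrite -ep -eq; lra.
Qed.


Lemma summand_comb a1 a2 xi eta T i w :
  admissible sigma a1 xi -> admissible sigma a2 eta ->
  (summand (comb f1 xi eta) T i w + summand (comb f2 xi eta) T i w <=
   summand xi T i w + summand eta T i w)%E.
Proof.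
move=> [_ _ x3 _] [_ _ y3 _]; rewrite /summand; case: ifPn => _; last by rewrite adde0.
rewrite -!EFinD lee_fin.
have hx := x3 w _ _ (sig_ge0 i.-1 w) (sig_le i.-1 i w (leq_pred i)).
have hy := y3 w _ _ (sig_ge0 i.-1 w) (sig_le i.-1 i w (leq_pred i)).
rewrite /comb /f1 /f2.
move: hx hy; move: (xi (sigma i.-1 w) w) (xi (sigma i w) w)
  (eta (sigma i.-1 w) w) (eta (sigma i w) w) => A A' B B' hx hy.
have [e1 o1] := hfacts (A + B); have [e2 o2] := hfacts (A' + B').
apply: major; move: e1 o1 e2 o2;
  move: ((A + B)./2) ((A' + B')./2) (odd (A + B) : nat) (odd (A' + B') : nat) => a b c e; lia.
Qed.

Lemma cost_comb a1 a2 xi eta T w :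
  admissible sigma a1 xi -> admissible sigma a2 eta ->
  (cost F sigma (comb f1 xi eta) T w + cost F sigma (comb f2 xi eta) T w <=
   cost F sigma xi T w + cost F sigma eta T w)%E.
Proof.
move=> ax ae; rewrite !cost_eq addeACA [X in (_ <= X)%E]addeACA.
apply: leeD.
  rewrite -!nneseriesD; try (by move=> *; exact: summand_ge0).
  apply: lee_nneseries => [i _ _|n _]; last exact: summand_comb ax ae.
  by apply: adde_ge0; exact: summand_ge0.
rewrite -!EFinD lee_fin /comb /f1 /f2.
move: (xi T w) (eta T w) => A B.
have [e1 o1] := hfacts (A + B).
apply: major; move: e1 o1; move: ((A + B)./2) (odd (A + B) : nat) => a c; lia.
Qed.


Variable P : probability Omega R.
Hypothesis FF0 : F 0 = 0.

Lemma value_ge0 k T : (0 <= value P F sigma k T)%E.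
Proof.
apply: le_ereal_inf_tmp => _ [xi _ <-]; apply: integral_ge0 => w _; exact: cost_ge0.
Qed.

Lemma value_le k T : (value P F sigma k T <= (F k%:R)%:E)%E.
Proof.
apply: ereal_inf_lbound; exists (fun _ _ => k).
  split => //.
  - move=> t n _; have [->|kn] := eqVneq k n.
      have -> : [set w : Omega | n = n] = setT by apply/seteqP; split.
      exact: (@measurableT _ (g_sigma_algebraType _)).
    have -> : [set w : Omega | k = n] = set0.
      by apply/seteqP; split => // w /= /eqP; rewrite (negbTE kn).
    exact: sigma_algebra0.
have -> : cost F sigma (fun _ _ => k) T = cst (F k%:R)%:E.
  rewrite cost_eq; apply/funext => w /=; rewrite eseries0 ?add0e // => i _ _.
  by rewrite /summand subnn FF0; case: ifPn.
rewrite integral_cst //.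
transitivity ((F k%:R)%:E * 1)%E; last by rewrite mule1.
congr (_ * _)%E; exact: probability_setT.
Qed.

Lemma key_pair a1 a2 c xi eta T : (a1 + a2 = c + c)%N -> 0 <= T ->
  admissible sigma a1 xi -> admissible sigma a2 eta ->
  (value P F sigma c T + value P F sigma c T <=
   \int[P]_w cost F sigma xi T w + \int[P]_w cost F sigma eta T w)%E.
Proof.
move=> hc T0 ax ae.
have a1' := comb_adm f1 _ _ _ _ _ (or_introl erefl) hc ax ae.
have a2' := comb_adm f2 _ _ _ _ _ (or_intror erefl) hc ax ae.
apply: (@le_trans _ _ (\int[P]_w cost F sigma (comb f1 xi eta) T w +
                       \int[P]_w cost F sigma (comb f2 xi eta) T w)%E).
  by apply: leeD; apply: ereal_inf_lbound; [exists (comb f1 xi eta) | exists (comb f2 xi eta)].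
rewrite -!ge0_integralD //; try (by move=> *; exact: cost_ge0);
  try (exact: meas_cost _ _ _ T0 a1'); try (exact: meas_cost _ _ _ T0 a2');
  try (exact: meas_cost _ _ _ T0 ax); try (exact: meas_cost _ _ _ T0 ae).
apply: ge0_le_integral => //.
- by move=> w _; apply: adde_ge0; exact: cost_ge0.
- by apply: emeasurable_funD; [exact: meas_cost _ _ _ T0 a1' | exact: meas_cost _ _ _ T0 a2'].
- by apply: emeasurable_funD; [exact: meas_cost _ _ _ T0 ax | exact: meas_cost _ _ _ T0 ae].
- by move=> w _; exact: cost_comb ax ae.
Qed.

End Aux.

Section Seq.
Context {R : realType}.

Lemma conv_chain (u : nat -> R) (mid : forall n, u n.+1 + u n.+1 <= u n + u n.+2) :
  forall i l, (i <= l)%N -> u i.+1 - u i <= u l.+1 - u l.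
Proof.
move=> i l /subnK <-; elim: (l - i)%N => [|n IH]; first by rewrite add0n.
apply: (le_trans IH); rewrite addSn; have := mid (n + i)%N; lra.
Qed.

Lemma conv_main (u : nat -> R) (mid : forall n, u n.+1 + u n.+1 <= u n + u n.+2) :
  forall n j, (j <= n)%N -> (j.+1)%:R * u n <= u (n - j)%N + j%:R * u n.+1.
Proof.
move=> n; elim=> [|j IH] jn; first by rewrite subn0 mul1r mul0r addr0.
have := IH (ltnW jn).
have := conv_chain u mid _ _ (leq_subr j.+1 n).
have -> : (n - j.+1).+1 = (n - j)%N by lia.
rewrite -[(j.+2)%:R]natr1 -[(j.+1)%:R]natr1; lra.
Qed.

End Seq.

Lemma ehelp {R : realType} (x : \bar R) (a y : R) :
  (a%:E <= x + y%:E)%E -> ((a - y)%:E <= x)%E.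
Proof.
case: x => [r| |] //= h; first by rewrite lee_fin; rewrite lee_fin in h; lra.
by rewrite leey.
Qed.

Theorem corollary2p8 (R : realType) (d : measure_display) (Omega : measurableType d)
  (P : probability Omega R) (lam : R) (sigma : nat -> Omega -> R) (F : R -> R)
  (T : R) (a k b : nat) :
  0 < lam -> is_poisson_arrivals P lam sigma ->
  F 0 = 0 -> (forall x, 0 <= x -> 0 <= F x) ->
  (forall x y, 0 <= x -> x < y -> F x < F y) ->
  (forall x y t, 0 <= x -> 0 <= y -> x != y -> 0 < t -> t < 1 ->
     F (t * x + (1 - t) * y) < t * F x + (1 - t) * F y) ->
  0 <= T -> (a < k)%N -> (0 < b)%N -> (a < b)%N -> (b <= k)%N ->
  (value P F sigma (k - a - 1) T <=
     (((b - a)%:R : R)^-1)%:E * value P F sigma (k - b) T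
     + (1 - ((b - a)%:R : R)^-1)%:E * value P F sigma (k - a) T)%E.
Proof.
move=> _ [s0 sinc smeas _ _] FF0 F0 _ Fconv T0 ak b0 ab bk.
pose u n := fine (value P F sigma n T).
have vE n : value P F sigma n T = (u n)%:E.
  rewrite /u fineK //; apply/fin_numPlt/andP; split.
    exact: (lt_le_trans (ltNyr 0) (value_ge0 sigma F F0 P n T)).
  exact: (le_lt_trans (value_le sigma F P FF0 n T) (ltry _)).
have mid n : u n.+1 + u n.+1 <= u n + u n.+2.
  have key := key_pair sigma s0 sinc smeas F F0 Fconv P n n.+2 n.+1.
  have hc : (n + n.+2 = n.+1 + n.+1)%N by lia.
  suff : ((u n.+1 + u n.+1 - u n)%:E <= value P F sigma n.+2 T)%E.
    by rewrite vE lee_fin; lra.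
  apply: le_ereal_inf_tmp => _ [eta ae <-].
  have ige0 : (0 <= \int[P]_w cost F sigma eta T w)%E.
    by apply: integral_ge0 => w _; exact: cost_ge0.
  move: ige0; case E : (\int[P]_w cost F sigma eta T w)%E => [r| |] // ige0; last by rewrite leey.
  suff : ((u n.+1 + u n.+1 - r)%:E <= value P F sigma n T)%E.
    by rewrite vE !lee_fin; lra.
  apply: le_ereal_inf_tmp => _ [xi ax <-].
  apply: ehelp; rewrite -E EFinD -!vE.
  exact: key.
set n := (k - a - 1)%N; set j := (b - a - 1)%N.
have e1 : (k - b = n - j)%N by rewrite /n /j; lia.
have e2 : (b - a = j.+1)%N by rewrite /j; lia.
have e3 : (k - a = n.+1)%N by rewrite /n; lia.
have jn : (j <= n)%N by rewrite /n /j; lia.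
rewrite e1 e2 e3 !vE -!EFinM -EFinD lee_fin.
have h := conv_main u mid n j jn.
have Jpos : (0 < (j.+1)%:R :> R) by rewrite ltr0n.
rewrite -(ler_pM2l Jpos).
have -> : (j.+1)%:R * ((j.+1)%:R^-1 * u (n - j)%N + (1 - (j.+1)%:R^-1) * u n.+1)
          = u (n - j)%N + j%:R * u n.+1.
  rewrite -natr1; field; rewrite natr1 pnatr_eq0 //.
exact: h.
Qed.
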